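(* Let $f$ be smooth and bistable (there is $\alpha\in(0,1)$ with $f(0)=f(\alpha)=f(1)=0$, $f'(0),f'(1)<0<f'(\alpha)$, $f>0$ on $(-\infty,0)\cup(\alpha,1)$, $f<0$ on $(0,\alpha)\cup(1,\infty)$), $\tau_m=1/\sup_{[0,1]}|f'|$, $\delta_+=-f'(1)$, $\delta_-=-f'(0)$, $\chi_0=\tfrac12\min\{\delta_+,\delta_-\}$, and $\Omega=\{\lambda\in\mathbb{C}:\mathrm{Re}\,\lambda>-\chi_0\}$. For $\tau\in(0,\tau_m)$ let $c=c_\ast(\tau)$ be the speed of the traveling wave of $u_t=v_x+f(u)$, $\tau v_t=u_x-v$ connecting $(0,0)$ to $(1,0)$, $b_\pm=1+\tau\delta_\pm$, and $$\mathbf{A}^\tau_\pm(\lambda)=(1-c^2\tau)^{-1}\begin{pmatrix}0&1-c^2\tau\\ \tau\lambda^2+\lambda b_\pm+\delta_\pm& -c(b_\pm+2\tau\lambda)\end{pmatrix}.$$ Then for all $\tau\in(0,\tau_m)$ and all $\lambda\in\Omega$, the matrices $\mathbf{A}^\tau_\pm(\lambda)$ have no eigenvalues on the imaginary axis (no center eigenspace), and their stable and unstable eigenspaces $\mathbb{S}^\tau_\pm(\lambda)$, $\mathbb{U}^\tau_\pm(\lambda)$ satisfy $\dim\mathbb{S}^\tau_\pm(\lambda)=\dim\mathbb{U}^\tau_\pm(\lambda)=1$.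
   Context: It is known that $c_\ast(\tau)^2\tau<1$. The matrices $\mathbf{A}^\tau_\pm(\lambda)$ are the limits as $x\to\pm\infty$ of the coefficient matrix of the first-order form of the linearized eigenvalue problem around the wave. *)

(* Defs.v *)
From HB Require Import structures.
From mathcomp Require Import all_boot all_order all_algebra.
From mathcomp Require Import all_classical all_reals all_analysis.
From mathcomp Require Import complex.
Set Implicit Arguments. Unset Strict Implicit. Unset Printing Implicit Defensive.
Import Order.TTheory GRing.Theory Num.Theory.
Import numFieldNormedType.Exports.
Local Open Scope classical_set_scope.
Local Open Scope complex_scope.
Local Open Scope ring_scope.

Section Defs.
Variable R : realType.

Definition smooth (f : R -> R) : Prop :=
  forall (n : nat) (x : R), derivable (derive1n n f) x 1.

Definition bistable (f : R -> R) (alpha : R) : Prop :=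
  [/\ 0 < alpha < 1,
      f 0 = 0 /\ f alpha = 0 /\ f 1 = 0,
      derive1 f 0 < 0 /\ derive1 f 1 < 0 /\ 0 < derive1 f alpha,
      (forall x, x < 0 -> 0 < f x) /\ (forall x, alpha < x < 1 -> 0 < f x)
    & (forall x, 0 < x < alpha -> f x < 0) /\ (forall x, 1 < x -> f x < 0)].

Definition tau_m (f : R -> R) : R :=
  (sup [set `|derive1 f x| | x in `[0, 1]])^-1.

Definition delta_plus (f : R -> R) : R := - derive1 f 1.
Definition delta_minus (f : R -> R) : R := - derive1 f 0.
Definition chi0 (f : R -> R) : R := (Num.min (delta_plus f) (delta_minus f)) / 2.

(* (u,v)(x,t) = (U,V)(x - c t) is a traveling wave of
   u_t = v_x + f(u), tau v_t = u_x - v, connecting (0,0) at x = -oo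
   to (1,0) at x = +oo. *)
Definition traveling_wave (f : R -> R) (tau c : R) : Prop :=
  exists U V : R -> R,
    [/\ forall x, derivable U x 1 /\ derivable V x 1,
        forall x, - c * derive1 U x = derive1 V x + f (U x),
        forall x, - (tau * c) * derive1 V x = derive1 U x - V x,
        U x @[x --> -oo] --> (0 : R) /\ V x @[x --> -oo] --> (0 : R)
      & U x @[x --> +oo] --> (1 : R) /\ V x @[x --> +oo] --> (0 : R)].

Definition Amat (tau c delta : R) (lam : R[i]) : 'M[R[i]]_2 :=
  let b := 1 + tau * delta in
  ((1 - c ^+ 2 * tau)^-1)%:C *:
  \matrix_(i < 2, j < 2)
    (if (i : nat) == 0%N then
       (if (j : nat) == 0%N then 0 else (1 - c ^+ 2 * tau)%:C)
     else
       (if (j : nat) == 0%N then tau%:C * lam ^+ 2 + lam * b%:C + delta%:C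
        else - c%:C * (b%:C + 2%:R * tau%:C * lam))).

End Defs.

Definition eigs (R : rcfType) (n : nat) (A : 'M[R[i]]_n) : seq R[i] :=
  sval (closed_field_poly_normal (char_poly A)).

(* Stable / unstable (generalized) eigenspaces of A acting on column vectors,
   represented (via transposition) as row spaces:
   sum over eigenvalues mu with Re mu < 0 (resp. > 0) of ker (A - mu)^n. *)
Definition stable_space (R : rcfType) (n : nat) (A : 'M[R[i]]_n) : 'M[R[i]]_n :=
  (\sum_(mu <- undup (eigs A) | (complex.Re mu < 0)%R) kermx ((A^T - mu%:M) ^+ n))%MS.
Definition unstable_space (R : rcfType) (n : nat) (A : 'M[R[i]]_n) : 'M[R[i]]_n :=
  (\sum_(mu <- undup (eigs A) | (0 < complex.Re mu)%R) kermx ((A^T - mu%:M) ^+ n))%MS.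

(* Main.v *)
Require Import Defs.
From HB Require Import structures.
From mathcomp Require Import all_boot all_order all_algebra.
From mathcomp Require Import all_classical all_reals all_analysis.
From mathcomp Require Import ring lra complex.
Import Order.TTheory GRing.Theory Num.Theory.
Local Open Scope ring_scope.

Section Helpers.
Local Open Scope complex_scope.
Lemma core (R : realFieldType) (t be h m x y u v : R) :
  0 < h -> 0 < m -> 0 < x -> m < x ^+ 2 -> t = be ^+ 2 + h ->
  u ^+ 2 - v ^+ 2 = t * (x ^+ 2 - y ^+ 2) - h * m -> u * v = t * x * y ->
  be ^+ 2 * x ^+ 2 < u ^+ 2.
Proof.
move=> h0 m0 x0 xm -> E1 E2.
rewrite ltNge; apply/negP => H.
have [u0|u0] := eqVneq u 0.
  move: E2; rewrite u0 mul0r => /esym/eqP; rewrite !mulf_eq0 => /orP[/orP[]|].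
  - move=> /eqP e; nra.
  - by move=> /eqP e; lra.
  - move=> /eqP y0; move: E1; rewrite u0 y0; nra.
have Up : 0 < u ^+ 2 by rewrite lt_def sqr_ge0 andbT sqrf_eq0 u0.
set U := u ^+ 2; set T := be ^+ 2 * x ^+ 2.
set E := (be ^+ 2 + h) * (x ^+ 2 - y ^+ 2) - h * m.
set C := ((be ^+ 2 + h) * x * y) ^+ 2.
have FU : U ^+ 2 - E * U - C = 0.
  rewrite /E -E1 /C -E2 /U; ring.
have FT : T ^+ 2 - E * T - C = - (x ^+ 2 * h * (be ^+ 2 * (x ^+ 2 - m) + (be ^+ 2 + h) * y ^+ 2)) by rewrite /T /E /C; ring.
have conv : T * (U ^+ 2 - E * U - C) - (T - U) * (- C) - U * (T ^+ 2 - E * T - C) = T * U * (U - T) by ring.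
have C0 : 0 <= C by rewrite /C sqr_ge0.
have T0 : 0 <= T by rewrite /T; nra.
have G0 : 0 <= be ^+ 2 * (x ^+ 2 - m) + (be ^+ 2 + h) * y ^+ 2 by nra.
have [G|G] := eqVneq (be ^+ 2 * (x ^+ 2 - m) + (be ^+ 2 + h) * y ^+ 2) 0.
  have : be ^+ 2 * (x ^+ 2 - m) = 0 by nra.
  move/eqP; rewrite mulf_eq0 => /orP[/eqP b0|]; last by lra.
  by move: H; rewrite /T b0 mul0r; lra.
have Gp : 0 < be ^+ 2 * (x ^+ 2 - m) + (be ^+ 2 + h) * y ^+ 2 by rewrite lt_def G G0.
have FTn : T ^+ 2 - E * T - C < 0 by rewrite FT oppr_lt0 !mulr_gt0 // exprn_gt0.
rewrite FU mulr0 sub0r in conv.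
have a1 : 0 <= (T - U) * C by apply: mulr_ge0 => //; rewrite subr_ge0.
have a2 : 0 < U * (- (T ^+ 2 - E * T - C)) by apply: mulr_gt0; rewrite // oppr_gt0.
have a3 : T * U * (U - T) <= 0 by apply: mulr_ge0_le0; [apply: mulr_ge0 => //; exact: ltW | rewrite subr_le0].
lra.
Qed.

Lemma cplx (R : rcfType) (t be h m : R) (r1 r2 z : R[i]) :
  0 < h -> 0 < m -> 0 < complex.Re z -> m < complex.Re z ^+ 2 -> t = be ^+ 2 + h ->
  r1 + r2 = - (2 * be)%:C * z -> r1 * r2 = - h%:C * (z ^+ 2 - m%:C) ->
  complex.Re r1 * complex.Re r2 < 0.
Proof.
case: r1 => a1 b1; case: r2 => a2 b2; case: z => x y /= h0 m0 x0 xm et.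
rewrite !expr2.
simpc. case=> e1 e2.
simpc. case=> e3 e4.
have ea2 : a2 = - (2 * be * x) - a1 by lra.
have eb2 : b2 = - (2 * be * y) - b1 by lra.
rewrite ea2 eb2 in e3 e4.
have := @core R t be h m x y (a1 + be * x) (b1 + be * y) h0 m0 x0 xm et.
rewrite ea2.
have -> : a1 * (- (2 * be * x) - a1) = be ^+ 2 * x ^+ 2 - (a1 + be * x) ^+ 2 by ring.
move=> H; rewrite subr_lt0; apply: H.
  rewrite et; move: e3; lra.
rewrite et; move: e4; lra.
Qed.

Lemma amat_e (R : realType) (tau c delta : R) (lam : R[i]) :
  let k := 1 - c ^+ 2 * tau in k != 0 ->
  let A := Amat tau c delta lam in
  [/\ A 0 0 = 0, A 0 1 = 1,
      A 1 0 = k%:C^-1 * (tau%:C * lam ^+ 2 + lam * (1 + tau * delta)%:C + delta%:C)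
    & A 1 1 = k%:C^-1 * (- c%:C * ((1 + tau * delta)%:C + 2%:R * tau%:C * lam))].
Proof.
move=> k k0 A; rewrite /A /Amat !mxE /= -/k fmorphV.
split => //; first by rewrite mulr0.
by rewrite mulVf // fmorph_eq0.
Qed.

Lemma amat_hyp (R : realType) (tau c delta : R) (lam : R[i]) :
  0 < tau -> 0 < delta -> tau * delta < 1 -> c ^+ 2 * tau < 1 ->
  - (delta / 2) < complex.Re lam ->
  let A := Amat tau c delta lam in
  forall r1 r2, r1 + r2 = A 0 0 + A 1 1 -> r1 * r2 = A 0 0 * A 1 1 - A 0 1 * A 1 0 ->
  complex.Re r1 * complex.Re r2 < 0.
Proof.
move=> t0 d0 td1 ct1 hl A r1 r2.
set k := 1 - c ^+ 2 * tau.
have kp : 0 < k by rewrite /k subr_gt0.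
have k0 : k != 0 by rewrite gt_eqF.
have kC : k%:C != 0 by rewrite fmorph_eq0.
have [e00 e01 e10 e11] := @amat_e R tau c delta lam k0.
rewrite /A e00 e01 e10 e11 => hs hp.
set z := (1 + tau * delta)%:C + (2 * tau)%:C * lam.
have Rez : complex.Re z = 1 + tau * delta + 2 * tau * complex.Re lam.
  by rewrite /z; clear -t0; case: lam => l1 l2 /=; simpc.
have := @cplx R tau (tau * c) (tau * k) ((1 - tau * delta) ^+ 2)
   ((2 * tau * k)%:C * r1) ((2 * tau * k)%:C * r2) z.
rewrite -/k in hs hp.
have ek : tau = (tau * c) ^+ 2 + tau * k by rewrite /k; ring.
clearbody k.
have ReM : forall (a : R) (w : R[i]), complex.Re (a%:C * w) = a * complex.Re w.
  by move=> a [? ?]; simpc.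
rewrite !ReM.
have -> : 2 * tau * k * complex.Re r1 * (2 * tau * k * complex.Re r2) =
  (2 * tau * k) ^+ 2 * (complex.Re r1 * complex.Re r2) by ring.
have pp : 0 < (2 * tau * k) ^+ 2 by rewrite exprn_gt0 // !mulr_gt0.
have hz : 1 < complex.Re z.
  rewrite Rez; have : tau * (- (delta / 2)) < tau * complex.Re lam by rewrite ltr_pM2l.
  lra.
rewrite pmulr_rlt0 //; apply.
- exact: mulr_gt0.
- by rewrite exprn_gt0 // subr_gt0.
- lra.
- have w0 : 0 < 1 - tau * delta by lra.
  rewrite -subr_gt0 (_ : _ - _ = (complex.Re z - (1 - tau * delta)) * (complex.Re z + (1 - tau * delta))); last by ring.
  have := mulr_gt0 t0 d0 => td0; apply: mulr_gt0; lra.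
- exact: ek.
- rewrite -mulrDr hs add0r /z !rmorphM !rmorphD !rmorphM /= ?rmorph_nat ?rmorph1.
  by field.
- rewrite /z mulrACA hp !rmorphM ?rmorphD ?rmorphB ?rmorphN ?rmorphXn ?rmorphM /= ?rmorph_nat ?rmorph1.
  by field.
Qed.
Lemma det2 (R : comNzRingType) (M : 'M[R]_2) :
  \det M = M 0 0 * M 1 1 - M 0 1 * M 1 0.
Proof.
rewrite (expand_det_row _ 0) !big_ord_recl big_ord0 /cofactor !det_mx11 !mxE /=.
rewrite !expr0 !mul1r addr0 /bump /= expr1 mulN1r mulrN.
by congr (M _ _ * M _ _ - M _ _ * M _ _); apply/val_inj.
Qed.

Lemma char2 (R : comNzRingType) (M : 'M[R]_2) :
  char_poly M = 'X ^+ 2 - (M 0 0 + M 1 1)%:P * 'X + (M 0 0 * M 1 1 - M 0 1 * M 1 0)%:P.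
Proof.
rewrite /char_poly det2 /char_poly_mx !mxE /= !mulr1n !mulr0n.
rewrite ?polyCD ?polyCB ?polyCM. ring.
Qed.

Lemma eigs2 (R : rcfType) (M : 'M[R[i]]_2) : exists r1 r2,
  [/\ eigs M = [:: r1; r2], r1 + r2 = M 0 0 + M 1 1,
      r1 * r2 = M 0 0 * M 1 1 - M 0 1 * M 1 0
    & forall mu, root (char_poly M) mu = (mu \in [:: r1; r2])].
Proof.
have He : char_poly M = \prod_(z <- eigs M) ('X - z%:P).
  rewrite /eigs; case: (closed_field_poly_normal (char_poly M)) => r /= Hr.
  by rewrite {1}Hr (monicP (char_poly_monic M)) scale1r.
have sz : size (eigs M) = 2%N.
  by have := size_char_poly M; rewrite He size_prod_XsubC; case.
move: He sz; case: (eigs M) => [|r1 [|r2 [|]]] //= He _.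
exists r1, r2; split => //; last by move=> mu; rewrite He root_prod_XsubC.
- have E : ('X - r1%:P) * ('X - r2%:P) = char_poly M by rewrite He !big_cons big_nil mulr1.
  rewrite char2 in E.
  have e0 := congr1 (fun p => p.[0]) E; have e1 := congr1 (fun p => p.[1]) E.
  move: e0 e1 => /=; rewrite !(hornerD, hornerN, hornerM, hornerX, hornerC, hornerXn, horner_exp) => e0 e1.
  have -> : r1 + r2 = 1 + (0 - r1) * (0 - r2) - (1 - r1) * (1 - r2) by ring.
  rewrite e0 e1; ring.
- have E : ('X - r1%:P) * ('X - r2%:P) = char_poly M by rewrite He !big_cons big_nil mulr1.
  rewrite char2 in E.
  have e0 := congr1 (fun p => p.[0]) E.
  move: e0 => /=; rewrite !(hornerD, hornerN, hornerM, hornerX, hornerC, hornerXn, horner_exp) => e0.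
  have -> : r1 * r2 = (0 - r1) * (0 - r2) by ring.
  rewrite e0; ring.
Qed.

Lemma rank_ker2 (R : rcfType) (M : 'M[R[i]]_2) (r r' : R[i]) :
  M 0 1 != 0 -> r + r' = M 0 0 + M 1 1 ->
  r * r' = M 0 0 * M 1 1 - M 0 1 * M 1 0 -> r != r' ->
  \rank (kermx ((M^T - r%:M) ^+ 2)) = 1%N.
Proof.
move=> M01 es ep neq.
set N := M^T - r%:M.
have eN : N ^+ 2 = (r' - r) *: N.
  apply/matrixP => i j; rewrite expr2 -mulmxE !mxE !big_ord_recl big_ord0 !mxE.
  have hr : r' = M 0 0 + M 1 1 - r by rewrite -es; ring.
  have e10 : M 1 0 = (M 0 0 * M 1 1 - r * r') / M 0 1.
    by rewrite ep; field.
  rewrite hr in e10 *.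
  have l : lift ord0 ord0 = 1 :> 'I_2 by apply/val_inj.
  rewrite l (_ : ord0 = 0 :> 'I_2) //.
  have o2 : forall k : 'I_2, k = 0 \/ k = 1.
    by case=> [[|[|k]] Hk]; [left|right|done]; apply/val_inj.
  case: (o2 i) => ->; case: (o2 j) => -> /=; rewrite ?mulr1n ?mulr0n ?e10; by field.
have nz : r' - r != 0 by rewrite subr_eq0 eq_sym.
rewrite mxrank_ker eN (eqmx_scale _ nz).
have hr : r' = M 0 0 + M 1 1 - r by rewrite -es; ring.
have e10 : M 1 0 = (M 0 0 * M 1 1 - r * r') / M 0 1 by rewrite ep; field.
rewrite hr in e10.
have N10 : N 1 0 = M 0 1 by rewrite !mxE /= mulr0n subr0.
have Nn0 : N != 0 by apply/eqP => N0; move: M01; rewrite -N10 N0 mxE eqxx.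
have dN : \det N = 0.
  rewrite det2 !mxE /= ?mulr1n ?mulr0n e10; by field.
have r0 : \rank N != 0%N by rewrite mxrank_eq0.
have r2 : \rank N != 2%N.
  apply/negP => /eqP h; have : row_free N by rewrite /row_free h.
  by rewrite row_free_unit unitmxE dN unitr0.
have rl := rank_leq_row N.
by case: (\rank N) r0 r2 rl => [|[|[|k]]].
Qed.

Arguments eigs2 {R}.
Arguments rank_ker2 {R M r r'}.

Lemma gen (R : rcfType) (M : 'M[R[i]]_2) : M 0 1 != 0 ->
  (forall r1 r2, r1 + r2 = M 0 0 + M 1 1 -> r1 * r2 = M 0 0 * M 1 1 - M 0 1 * M 1 0 ->
     complex.Re r1 * complex.Re r2 < 0) ->
  (forall mu : R[i], eigenvalue M^T mu -> complex.Re mu != 0) /\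
  (\rank (stable_space M) = 1%N /\ \rank (unstable_space M) = 1%N).
Proof.
move=> M01 hyp.
have [r1 [r2 [ee es ep eroot]]] := eigs2 M.
have H := hyp r1 r2 es ep.
have cT : char_poly M^T = char_poly M by rewrite !char2 !mxE [M 1 0 * _]mulrC.
have neq : r1 != r2.
  by apply/eqP => e; move: H; rewrite e; nra.
split.
  move=> mu; rewrite eigenvalue_root_char cT eroot !inE => /orP[] /eqP ->;
  apply/eqP => e; move: H; rewrite e; nra.
have es' : r2 + r1 = M 0 0 + M 1 1 by rewrite addrC.
have ep' : r2 * r1 = M 0 0 * M 1 1 - M 0 1 * M 1 0 by rewrite mulrC.
have neq' : r2 != r1 by rewrite eq_sym.
rewrite /stable_space /unstable_space ee /= inE (negbTE neq) /= !big_cons !big_nil.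
have [h1|h1|h1] := ltgtP (complex.Re r1) 0.
- have h2 : 0 < complex.Re r2 by nra.
  rewrite ?h1 ?(lt_gtF h1) h2 (lt_gtF h2) /=; split; rewrite addsmx0.
  - exact: (rank_ker2 M01 es ep neq).
  - exact: (rank_ker2 M01 es' ep' neq').
- have h2 : complex.Re r2 < 0 by nra.
  rewrite ?h1 ?(lt_gtF h1) h2 (lt_gtF h2) /=; split; rewrite addsmx0.
  - exact: (rank_ker2 M01 es' ep' neq').
  - exact: (rank_ker2 M01 es ep neq).
- by move: H; rewrite h1 mul0r ltxx.
Qed.
Lemma tau_delta (R : realType) (f : R -> R) (tau x0 : R) :
  0 <= x0 <= 1 -> derive1 f x0 < 0 -> 0 < tau < tau_m f -> tau * (- derive1 f x0) < 1.
Proof.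
move=> hx hd /andP[t0 tm].
set S := [set `|derive1 f x| | x in `[0, 1]]%classic.
have Sx : S `|derive1 f x0| by exists x0 => //; rewrite /= in_itv /= hx.
have en : `|derive1 f x0| = - derive1 f x0 by rewrite ltr0_norm.
case: (pselect (has_sup S)) => hs.
- have le := sup_upper_bound hs Sx.
  have sp : 0 < sup S by apply: lt_le_trans le; rewrite normr_gt0 lt_eqF.
  move: tm; rewrite /tau_m -/S => tm.
  have : tau * sup S < 1 by rewrite -ltr_pdivlMr // div1r.
  rewrite -en; have := ler_wpM2l (ltW t0) le; lra.
- move: tm; rewrite /tau_m -/S sup_out // invr0; lra.
Qed.
End Helpers.

Theorem lemma3p13 (R : realType) (f : R -> R) (alpha : R) :
  smooth f -> bistable f alpha ->
  forall tau c : R, 0 < tau < tau_m f ->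
  traveling_wave f tau c -> c ^+ 2 * tau < 1 ->
  forall lam : R[i], - chi0 f < complex.Re lam ->
  let Ap := Amat tau c (delta_plus f) lam in
  let Am := Amat tau c (delta_minus f) lam in
  [/\ forall mu : R[i], eigenvalue Ap^T mu -> complex.Re mu != 0,
      forall mu : R[i], eigenvalue Am^T mu -> complex.Re mu != 0,
      \rank (stable_space Ap) = 1%N /\ \rank (unstable_space Ap) = 1%N
    & \rank (stable_space Am) = 1%N /\ \rank (unstable_space Am) = 1%N].
Proof.
move=> _ [_ _ [d0 [d1 _]] _ _] tau c ht _ ct lam hl Ap Am.
have t0 : 0 < tau by case/andP: ht.
have dp : 0 < delta_plus f by rewrite /delta_plus oppr_gt0.
have dm : 0 < delta_minus f by rewrite /delta_minus oppr_gt0.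
have tdp : tau * delta_plus f < 1 by apply: (@tau_delta R f tau 1) => //; rewrite ler01 lexx.
have tdm : tau * delta_minus f < 1 by apply: (@tau_delta R f tau 0) => //; rewrite ler01 lexx.
have hp : - (delta_plus f / 2) < complex.Re lam.
  apply: le_lt_trans hl; rewrite lerN2 /chi0 ler_pM2r ?ge_min ?lexx //.
have hm : - (delta_minus f / 2) < complex.Re lam.
  apply: le_lt_trans hl; rewrite lerN2 /chi0 ler_pM2r ?ge_min ?lexx ?orbT //.
have kne : 1 - c ^+ 2 * tau != 0 by rewrite subr_eq0 eq_sym lt_eqF.
have [_ eP _ _] := @amat_e R tau c (delta_plus f) lam kne.
have [_ eM _ _] := @amat_e R tau c (delta_minus f) lam kne.
have [P1 P2] : (forall mu : R[i], eigenvalue Ap^T mu -> complex.Re mu != 0) /\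
  (\rank (stable_space Ap) = 1%N /\ \rank (unstable_space Ap) = 1%N).
  apply: gen; first by rewrite /Ap eP oner_neq0.
  exact: (@amat_hyp R tau c (delta_plus f) lam t0 dp tdp ct hp).
have [M1 M2] : (forall mu : R[i], eigenvalue Am^T mu -> complex.Re mu != 0) /\
  (\rank (stable_space Am) = 1%N /\ \rank (unstable_space Am) = 1%N).
  apply: gen; first by rewrite /Am eM oner_neq0.
  exact: (@amat_hyp R tau c (delta_minus f) lam t0 dm tdm ct hm).
by split.
Qed.
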